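(* Let $H=\sum_{\mathbf{j}\in V}h_{\mathbf{j}}$ be a Hamiltonian whose frustration graph $G$ is claw-free and contains a simplicial clique $K_s$, and let $\chi$ be a simplicial mode with respect to $K_s$. Then \[ T_G(u)\Big(1+u\sum_{\mathbf{j}\in K_s}h_{\mathbf{j}}\Big)\chi\,T_G(-u)=Z_G(-u^2)\Big(1-u\sum_{\mathbf{j}\in K_s}h_{\mathbf{j}}\Big)\chi . \]
   Context: Setting: $V$ a finite set of distinct $n$-qubit Pauli strings, $H=\sum_{\mathbf{j}\in V}h_{\mathbf{j}}$ with $h_{\mathbf{j}}=b_{\mathbf{j}}\sigma^{\mathbf{j}}$, $b_{\mathbf{j}}\in\mathbb{R}\setminus\{0\}$; frustration graph $G$: edge iff terms anticommute; claw-free: no induced $K_{1,3}$. Simplicial clique: clique $K_s$ with $\Gamma(\mathbf{j})\setminus K_s$ a clique for every $\mathbf{j}\in K_s$. Simplicial mode: Pauli operator $\chi=\sigma^{\mathbf{j}^*}$, $\mathbf{j}^*\notin V$, anticommuting with $h_{\mathbf{k}}$ iff $\mathbf{k}\in K_s$. For an independent set $S$, $h_S=\prod_{\mathbf{j}\in S}h_{\mathbf{j}}$; $T_G(u)=\sum_S(-u)^{|S|}h_S$ over all independent sets of $G$; $Z_G(-u^2)=T_G(u)T_G(-u)$. *)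

(* Defs.v *)
From HB Require Import structures.
From mathcomp Require Import all_boot all_order all_algebra all_field.
Set Implicit Arguments. Unset Strict Implicit. Unset Printing Implicit Defensive.
Import Order.TTheory GRing.Theory Num.Theory.
Local Open Scope ring_scope.

(* An n-qubit Pauli string: a word j in {0,1,2,3}^n (0=I, 1=X, 2=Y, 3=Z). *)
Definition pauli_string (n : nat) := {ffun 'I_n -> 'I_4}.

(* Entry (r,c) (r,c in {0,1}, false = 0) of the single-qubit Pauli matrix. *)
Definition pauli1 (a : 'I_4) (r c : bool) : algC :=
  match nat_of_ord a with
  | 0%N => if r == c then 1 else 0
  | 1%N => if r == c then 0 else 1
  | 2%N => if r == c then 0 else if r then 'i else - 'i
  | _   => if r == c then (if r then -1 else 1) else 0
  end.

Definition bitk (k i : nat) : bool := odd (i %/ 2 ^ k).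

(* sigma^j = sigma^{j_0} (x) ... (x) sigma^{j_{n-1}}, as a 2^n x 2^n matrix
   (qubit k corresponds to bit k of the basis index). *)
Definition sigma (n : nat) (j : pauli_string n) : 'M[algC]_(2 ^ n) :=
  \matrix_(r, c) \prod_(k < n) pauli1 (j k) (bitk k r) (bitk k c).

Definition hterm (n : nat) (b : pauli_string n -> algC) (j : pauli_string n)
  : 'M[algC]_(2 ^ n) := b j *: sigma j.

(* Anticommutation of Pauli strings (equivalently of the terms, as b_j != 0). *)
Definition anticomm (n : nat) (j k : pauli_string n) : bool :=
  sigma j *m sigma k == - (sigma k *m sigma j).

Definition fadj (n : nat) (j k : pauli_string n) : bool :=
  (j != k) && anticomm j k.

Definition is_clique (n : nat) (C : {set pauli_string n}) : bool :=
  [forall j in C, forall k in C, (j != k) ==> fadj j k].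

Definition is_independent (n : nat) (S : {set pauli_string n}) : bool :=
  [forall j in S, forall k in S, ~~ fadj j k].

Definition claw_free (n : nat) (V : {set pauli_string n}) : Prop :=
  ~ exists j a b c,
      [/\ [&& j \in V, a \in V, b \in V & c \in V],
          [&& fadj j a, fadj j b & fadj j c],
          [&& a != b, a != c & b != c] &
          [&& ~~ fadj a b, ~~ fadj a c & ~~ fadj b c]].

Definition nbhd (n : nat) (V : {set pauli_string n}) (j : pauli_string n)
  : {set pauli_string n} := [set k in V | fadj j k].

Definition simplicial_clique (n : nat) (V K : {set pauli_string n}) : Prop :=
  [/\ K \subset V, is_clique K &
      forall j, j \in K -> is_clique (nbhd V j :\: K)].

Definition simplicial_mode (n : nat) (V K : {set pauli_string n})
  (jstar : pauli_string n) : Prop :=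
  jstar \notin V /\ forall k, k \in V -> (anticomm jstar k <-> k \in K).

Definition hS (n : nat) (b : pauli_string n -> algC) (S : {set pauli_string n})
  : 'M[algC]_(2 ^ n) := \prod_(j in S) hterm b j.

Definition TG (n : nat) (V : {set pauli_string n}) (b : pauli_string n -> algC)
  (u : algC) : 'M[algC]_(2 ^ n) :=
  \sum_(S in powerset V | is_independent S) (- u) ^+ #|S| *: hS b S.

(* Z_G(-u^2) := T_G(u) T_G(-u)  (ZG u denotes Z_G(-u^2)). *)
Definition ZG (n : nat) (V : {set pauli_string n}) (b : pauli_string n -> algC)
  (u : algC) : 'M[algC]_(2 ^ n) := TG V b u * TG V b (- u).

(* Main.v *)
Require Import Defs.
From HB Require Import structures.
From mathcomp Require Import all_boot all_order all_algebra all_field.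
Import Order.TTheory GRing.Theory Num.Theory.
Local Open Scope ring_scope.

Module Helpers.
Set Implicit Arguments. Unset Strict Implicit. Unset Printing Implicit Defensive.

Lemma sum_double (F : nat -> algC) N :
  \sum_(m < 2 * N) F m = \sum_(m < N) (F (2 * m)%N + F (2 * m).+1).
Proof.
elim: N => [|N IH]; first by rewrite !big_ord0.
have E : (2 * N.+1 = (2 * N).+1.+1)%N by rewrite mulnS addnC addn2.
rewrite E big_ord_recr /= big_ord_recr /= IH big_ord_recr /= addrA.
by [].
Qed.

Lemma bitkS k m : bitk k.+1 m = bitk k m./2.
Proof. by rewrite /bitk expnS divnMA divn2. Qed.

Lemma KL n (f : 'I_n -> bool -> algC) :
  \sum_(m < 2 ^ n) \prod_(k < n) f k (bitk k m) = \prod_(k < n) (f k false + f k true).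
Proof.
elim: n f => [|n IH] f.
  by rewrite expn0 big_ord1 !big_ord0.
rewrite big_ord_recl -(IH (fun i x => f (lift ord0 i) x)).
pose G := fun m : nat => f ord0 (odd m) * \prod_(i < n) f (lift ord0 i) (bitk i m./2).
have -> : \sum_(m < 2 ^ n.+1) \prod_(k < n.+1) f k (bitk k m) =
  \sum_(m < 2 * 2 ^ n) G m.
  rewrite expnS; apply: eq_bigr => m _.
  rewrite big_ord_recl /G /bitk expn0 divn1; congr (_ * _); apply: eq_bigr => i _.
  have -> : (lift ord0 i : nat) = i.+1 by [].
  by rewrite expnS divnMA divn2.
rewrite sum_double mulr_sumr; apply: eq_bigr => m _.
rewrite /G !mul2n /= odd_double uphalf_double doubleK /= -mulrDl.
by [].
Qed.

Definition mul1 (a b : 'I_4) (r c : bool) : algC :=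
  pauli1 a r false * pauli1 b false c + pauli1 a r true * pauli1 b true c.
Definition eps (a b : 'I_4) : algC :=
  if [|| (a == 0 :> nat), (b == 0 :> nat) | a == b] then 1 else -1.

Lemma iiE : 'i * 'i = -1 :> algC.
Proof. by rewrite -expr2 sqrCi. Qed.

Lemma mul1_comm a b r c : mul1 a b r c = eps a b * mul1 b a r c.
Proof.
case: a => [[|[|[|[|a]]]] Ha] //; case: b => [[|[|[|[|b]]]] Hb] //;
case: r; case: c; rewrite /mul1 /pauli1 /eps /= ?mul0r ?mulr0 ?mul1r ?mulr1 ?addr0 ?add0r ?mulN1r ?mulrN1 ?mulrN ?mulNr ?opprK ?iiE //.
all: by rewrite ?oppr0.
Qed.

Lemma sigma_mulE n (j l : pauli_string n) :
  sigma j *m sigma l = \matrix_(r, c) \prod_(k < n) mul1 (j k) (l k) (bitk k r) (bitk k c).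
Proof.
apply/matrixP => r c; rewrite !mxE.
rewrite -(KL (fun k x => pauli1 (j k) (bitk k r) x * pauli1 (l k) x (bitk k c))).
apply: eq_bigr => m _; rewrite !mxE -big_split /=.
by [].
Qed.

Lemma sigma_comm_eps n (j l : pauli_string n) :
  sigma j *m sigma l = (\prod_(k < n) eps (j k) (l k)) *: (sigma l *m sigma j).
Proof.
rewrite !sigma_mulE; apply/matrixP => r c; rewrite !mxE -big_split /=.
by apply: eq_bigr => k _; rewrite mul1_comm.
Qed.

Lemma eps_pm n (j l : pauli_string n) :
  (\prod_(k < n) eps (j k) (l k)) = 1 \/ (\prod_(k < n) eps (j k) (l k)) = -1.
Proof.
apply: (big_ind (fun x : algC => x = 1 \/ x = -1)); first by left.
  move=> x y [->|->] [->|->]; rewrite ?mulr1 ?mul1r ?mulrN1 ?opprK; by [left|right].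
by move=> k _; rewrite /eps; case: ifP; [left|right].
Qed.

Lemma sigma_comm n (j l : pauli_string n) :
  ~~ anticomm j l -> sigma j *m sigma l = sigma l *m sigma j.
Proof.
rewrite /anticomm => H; have E := sigma_comm_eps j l.
case: (eps_pm j l) => Ep; rewrite Ep in E; first by rewrite E scale1r.
by rewrite scaleN1r in E; rewrite E eqxx in H.
Qed.

Section Comb.
Variable n : nat.
Local Notation ps := (pauli_string n).
Local Notation M := ('M[algC]_(2 ^ n)).

Lemma fadj_sym (j k : ps) : fadj j k = fadj k j.
Proof.
rewrite /fadj /anticomm eq_sym; case: (k != j) => //=.
apply/eqP/eqP => ->; by rewrite opprK.
Qed.

Lemma fadj_irr (j : ps) : fadj j j = false.
Proof. by rewrite /fadj eqxx. Qed.

Lemma comm_nadj (j k : ps) : ~~ fadj j k -> sigma j * sigma k = sigma k * sigma j.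
Proof.
rewrite /fadj negb_and negbK; case/orP => [/eqP -> //|H].
exact: sigma_comm.
Qed.

Lemma anti_adj (j k : ps) : fadj j k -> sigma j * sigma k = - (sigma k * sigma j).
Proof. by case/andP => _ /eqP. Qed.

Lemma indepP (S : {set ps}) :
  reflect (forall j k, j \in S -> k \in S -> ~~ fadj j k) (is_independent S).
Proof.
apply: (iffP forallP) => [H j k jS kS | H j].
  by move/implyP: (H j) => /(_ jS) /forallP /(_ k) /implyP /(_ kS).
by apply/implyP => jS; apply/forallP => k; apply/implyP => kS; apply: H.
Qed.

Lemma cliqueP (C : {set ps}) :
  reflect (forall j k, j \in C -> k \in C -> j != k -> fadj j k) (is_clique C).
Proof.
apply: (iffP forallP) => [H j k jS kS | H j].
  by move/implyP: (H j) => /(_ jS) /forallP /(_ k) /implyP /(_ kS) /implyP.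
by apply/implyP => jS; apply/forallP => k; apply/implyP => kS; apply/implyP; apply: H.
Qed.

Lemma prod_rem_comm (r : seq ps) (P : pred ps) (F : ps -> M) x :
  uniq r -> x \in r -> P x -> (forall y, P y -> F x * F y = F y * F x) ->
  \prod_(y <- r | P y) F y = F x * \prod_(y <- r | P y && (y != x)) F y.
Proof.
move=> ur xr Px Hc; elim: r ur xr => [|y r IH] //= /andP [yr ur].
rewrite inE big_cons big_cons; case: (eqVneq x y) => [Exy|nxy] /= xr.
  subst y; rewrite Px andbF; congr (_ * _).
  rewrite big_seq_cond [in RHS]big_seq_cond; apply: eq_bigl => z.
  by case: eqVneq => [->|]; rewrite ?andbT ?(negbTE yr) ?andbF.
rewrite IH // andbT; case: ifP => // Py.
by rewrite !mulrA Hc.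
Qed.

Lemma prod_D1_comm (A : {set ps}) (x : ps) (F : ps -> M) :
  x \in A -> (forall y, y \in A -> F x * F y = F y * F x) ->
  \prod_(y in A) F y = F x * \prod_(y in A :\ x) F y.
Proof.
move=> xA Hc.
rewrite (@prod_rem_comm (index_enum ps) (mem A) F x) //; last first.
- by rewrite /index_enum -enumT mem_enum.
- by rewrite /index_enum -enumT enum_uniq.
congr (_ * _); apply: eq_bigl => y; rewrite !inE andbC //.
Qed.


Lemma sAl (k : algC) (A B : M) : k *: (A * B) = (k *: A) * B.
Proof. exact: scalemxAl. Qed.
Lemma sAr (k : algC) (A B : M) : k *: (A * B) = A * (k *: B).
Proof. exact: scalemxAr. Qed.

Definition PS (S : {set ps}) : M := \prod_(j in S) sigma j.
Definition TT (W : {set ps}) (c : ps -> algC) : M :=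
  \sum_(S in powerset W | is_independent S) (\prod_(j in S) c j) *: PS S.
Definition cnb (q : ps) : {set ps} := [set y | (y == q) || fadj q y].

Lemma comm_PS (x : ps) (S : {set ps}) : (forall y, y \in S -> sigma x * sigma y = sigma y * sigma x) ->
  sigma x * PS S = PS S * sigma x.
Proof. by move=> H; apply: commr_prod => y /H. Qed.

Lemma comm_TT (x : ps) (W : {set ps}) (c : ps -> algC) : (forall y, y \in W -> sigma x * sigma y = sigma y * sigma x) ->
  sigma x * TT W c = TT W c * sigma x.
Proof.
move=> H; rewrite /TT mulr_sumr mulr_suml; apply: eq_bigr => S /andP [SW _].
rewrite -sAr -sAl comm_PS // => y yS; apply: H.
by rewrite inE in SW; apply: (subsetP SW).
Qed.

Lemma PS_U1 (q : ps) (S : {set ps}) : q \notin S -> (forall y, y \in S -> ~~ fadj q y) ->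
  PS (q |: S) = sigma q * PS S.
Proof.
move=> qS H; rewrite /PS (@prod_D1_comm _ q) ?setU11 ?setU1K // => y.
rewrite !inE; case/orP => [/eqP -> //|yS].
by apply: comm_nadj; apply: H.
Qed.

Lemma split_one (W : {set ps}) (c : ps -> algC) (q : ps) : q \in W ->
  \sum_(S in powerset W | is_independent S)
     (if q \in S then (\prod_(j in S) c j) *: PS S else 0)
  = c q *: (sigma q * TT (W :\: cnb q) c).
Proof.
move=> qW.
rewrite -big_mkcondr /=.
rewrite (reindex_onto (fun S' => q |: S') (fun S => S :\ q)) /=; last first.
  by move=> S /andP [_ qS]; rewrite setD1K.
rewrite /TT mulr_sumr scaler_sumr.
apply: eq_big => [S'|S' HS'].
  rewrite setU11 andbT !inE.
  apply/idP/idP.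
    case/andP => [/andP [sub ind] e].
    have qS : q \notin S' by move/eqP: e => <-; rewrite !inE eqxx.
    apply/andP; split.
      apply/subsetP => y yS; rewrite !inE.
      have -> : (y == q) = false by apply/eqP => E; rewrite -E yS in qS.
      rewrite (negbTE (indepP _ ind q y (setU11 _ _) _)) ?(setU1r _ yS) //=.
      by apply: (subsetP sub); rewrite setU1r.
    by apply/indepP => j k jS kS; apply: (indepP _ ind); rewrite setU1r.
  case/andP => sub ind.
  have Hs : forall y, y \in S' -> [/\ y \in W, y != q & ~~ fadj q y].
    move=> y yS; move/subsetP: sub => /(_ y yS); rewrite !inE negb_or.
    by case/andP => /andP [-> ->] ->.
  have qS : q \notin S' by apply/negP => /Hs [_]; rewrite eqxx.
  rewrite setU1K // eqxx andbT; apply/andP; split.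
    apply/subsetP => y; rewrite !inE; case/orP => [/eqP -> //|yS].
    by case: (Hs y yS).
  apply/indepP => j k; rewrite !inE => /orP [/eqP ->|jS] /orP [/eqP ->|kS].
  - by rewrite fadj_irr.
  - by case: (Hs k kS).
  - by rewrite fadj_sym; case: (Hs j jS).
  - exact: (indepP _ ind).
case/andP: HS' => /andP [/andP [_ ind] _] e.
have qS : q \notin S' by move/eqP: e => <-; rewrite !inE eqxx.
rewrite big_setU1 //= PS_U1 //; last first.
  by move=> y yS; apply: (indepP _ ind); rewrite ?setU11 ?setU1r.
by rewrite -sAr scalerA.
Qed.

Lemma split_clique (W Q : {set ps}) (c : ps -> algC) :
  Q \subset W -> is_clique Q ->
  TT W c = TT (W :\: Q) c + \sum_(q in Q) c q *: (sigma q * TT (W :\: cnb q) c).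
Proof.
move=> QW cQ.
pose f := fun S : {set ps} => (\prod_(j in S) c j) *: PS S.
have E : forall S : {set ps}, is_independent S ->
    f S = (if S :&: Q == set0 then f S else 0) + \sum_(q in Q) (if q \in S then f S else 0).
  move=> S iS; case: eqP => [E0|/eqP N0].
    rewrite big1 ?addr0 // => q qQ; case: ifP => // qS.
    have : q \in S :&: Q by rewrite inE qS qQ.
    by rewrite E0 inE.
  case/set0Pn: N0 => q0; rewrite inE => /andP [q0S q0Q].
  rewrite add0r (bigD1 q0) //= q0S big1 ?addr0 // => q /andP [qQ nq]; case: ifP => // qS.
  by have := indepP _ iS q q0 qS q0S; rewrite (cliqueP _ cQ q q0 qQ q0Q nq).
rewrite /TT (eq_bigr _ (fun (S : {set ps}) HS => E S (andP HS).2)) big_split /=.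
rewrite -big_mkcondr /= exchange_big /=; congr (_ + _).
  rewrite /f; apply: eq_bigl => S; rewrite !inE setDE subsetI setI_eq0 disjoints_subset.
  by rewrite andbAC.
apply: eq_bigr => q qQ; apply: split_one.
exact: (subsetP QW).
Qed.

Lemma AC (x : ps) (W : {set ps}) (c : ps -> algC) :
  is_clique [set y in W | fadj x y] ->
  sigma x * TT W c + TT W c * sigma x =
  (sigma x * TT (W :\: [set y in W | fadj x y]) c) *+ 2.
Proof.
set Q := [set y in W | fadj x y] => cQ.
have QW : Q \subset W by apply/subsetP => y; rewrite inE => /andP [].
rewrite (split_clique c QW cQ).
have C0 : sigma x * TT (W :\: Q) c = TT (W :\: Q) c * sigma x.
  apply: comm_TT => y; rewrite !inE => /andP [H yW]; apply: comm_nadj.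
  by rewrite yW in H.
have S0 : sigma x * (\sum_(q in Q) c q *: (sigma q * TT (W :\: cnb q) c)) +
          (\sum_(q in Q) c q *: (sigma q * TT (W :\: cnb q) c)) * sigma x = 0.
  rewrite mulr_sumr mulr_suml -big_split big1 // => q qQ.
  rewrite /= -sAr -sAl -scalerDr.
  have Hxq : fadj x q by move: qQ; rewrite inE => /andP [].
  have CE : sigma x * TT (W :\: cnb q) c = TT (W :\: cnb q) c * sigma x.
    apply: comm_TT => y; rewrite !inE negb_or => /andP [/andP [nyq nqy] yW].
    apply: comm_nadj; apply/negP => Hxy.
    have yQ : y \in Q by rewrite inE yW Hxy.
    by rewrite (cliqueP _ cQ q y qQ yQ) ?(eq_sym q) in nqy.
  by rewrite -mulrA -CE !mulrA anti_adj // mulNr addNr scaler0.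
rewrite mulrDr mulrDl addrACA S0 addr0 C0.
by [].
Qed.

Lemma clique_sub (C C' : {set ps}) : C' \subset C -> is_clique C -> is_clique C'.
Proof.
move=> sub /cliqueP cC; apply/cliqueP => j k jC kC; apply: cC; exact: (subsetP sub).
Qed.

Lemma final_alg (g A B : M) :
  g * A + A * g = B *+ 2 -> g * B = B * g -> (1 + g) * (A - B) = (A + B) * (1 - g).
Proof.
move=> H1 H2.
have H1' : g * A = B *+ 2 - A * g by rewrite -H1 addrK.
rewrite mulrDl mul1r mulrBr H1' H2 mulrDl !mulrBr !mulr1 mulr2n.
by rewrite !addrA subrK [A + B - _]addrAC.
Qed.

Lemma D_lemma (x y C R : M) :
  x * y = - (y * x) -> C * x = (x * R) *+ 2 - x * C ->
  x * (y * C) - (y * C) * x = - ((y * x * R) *+ 2).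
Proof.
move=> H1 H2.
rewrite -mulrA H2 mulrBr mulrnAr !mulrA H1 mulNr.
by rewrite opprB addrA addNr add0r.
Qed.

Definition Dm (V : {set ps}) (c : ps -> algC) (k j : ps) : M :=
  sigma k * (sigma j * TT (V :\: cnb j) c) - (sigma j * TT (V :\: cnb j) c) * sigma k.

Lemma Dhalf (V K : {set ps}) (c : ps -> algC) (k j : ps) :
  simplicial_clique V K -> k \in K -> j \in K -> k != j ->
  Dm V c k j = - ((sigma j * sigma k *
     TT ((V :\: cnb j) :\: [set y in V :\: cnb j | fadj k y]) c) *+ 2).
Proof.
move=> [KV cK sK] kK jK nkj.
have Hkj : fadj k j by apply: (cliqueP _ cK).
have cl : is_clique [set y in V :\: cnb j | fadj k y].
  apply: clique_sub (sK k kK); apply/subsetP => y; rewrite !inE negb_or.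
  case/andP => /andP [/andP [nyj njy] yV] ky; rewrite yV ky /= andbT.
  apply/negP => yK; move: njy; rewrite (cliqueP _ cK j y jK yK) //.
  by rewrite eq_sym.
have H := AC c cl.
apply: D_lemma; first exact: anti_adj.
by rewrite -H [sigma k * _ + _]addrC addrK.
Qed.

Lemma Dsym (V K : {set ps}) (c : ps -> algC) (k j : ps) :
  simplicial_clique V K -> k \in K -> j \in K -> Dm V c k j + Dm V c j k = 0.
Proof.
move=> sc kK jK; case: (eqVneq k j) => [<-|nkj].
  have Cc : sigma k * TT (V :\: cnb k) c = TT (V :\: cnb k) c * sigma k.
    apply: comm_TT => y; rewrite !inE negb_or => /andP [/andP [_ H] _].
    exact: comm_nadj.
  by rewrite /Dm -mulrA -Cc mulrA subrr addr0.
have [KV cK sK] := sc.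
have Hkj : fadj k j by apply: (cliqueP _ cK).
rewrite (Dhalf c sc) // (Dhalf c sc) 1?eq_sym //.
have -> : (V :\: cnb k) :\: [set y in V :\: cnb k | fadj j y] =
          (V :\: cnb j) :\: [set y in V :\: cnb j | fadj k y].
  apply/setP => y; rewrite !inE; case: (y \in V) => //=; rewrite ?andbT ?andbF //.
  have [->|nyj] := eqVneq y j.
    by rewrite Hkj !orbT /= ?andbF.
  have [->|nyk] := eqVneq y k.
    by rewrite (fadj_sym j k) Hkj !orbT /= ?andbF.
  rewrite /=.
  by case: (fadj j y); case: (fadj k y).
rewrite (anti_adj Hkj) mulNr mulNrn opprK addNr.
by [].
Qed.

Lemma core (V K : {set ps}) (jstar : ps) (c : ps -> algC) :
  simplicial_clique V K -> simplicial_mode V K jstar ->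
  (1 + \sum_(k in K) c k *: sigma k) * sigma jstar * TT V c
  = TT V c * (1 - \sum_(k in K) c k *: sigma k) * sigma jstar.
Proof.
move=> sc [jV Hj]; have [KV cK sK] := sc.
set g := \sum_(k in K) c k *: sigma k.
pose C := fun q => TT (V :\: cnb q) c.
set A := TT (V :\: K) c.
set B := \sum_(q in K) c q *: (sigma q * C q).
have TE : TT V c = A + B by apply: split_clique.
have KC : forall q y, q \in K -> y \in K -> y \notin cnb q -> False.
  move=> q y qK yK; rewrite !inE negb_or => /andP [nyq nqy].
  by move: nqy; rewrite (cliqueP _ cK q y qK yK) // eq_sym.
have chiA : sigma jstar * A = A * sigma jstar.
  apply: comm_TT => y; rewrite !inE => /andP [yK yV]; apply: sigma_comm.
  by apply/negP => an; have := (Hj y yV).1 an; rewrite (negbTE yK).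
have chiC : forall q, q \in K -> sigma jstar * C q = C q * sigma jstar.
  move=> q qK; apply: comm_TT => y; rewrite in_setD => /andP [ncnb yV].
  apply: sigma_comm; apply/negP => an.
  exact: (KC q y qK ((Hj y yV).1 an) ncnb).
have chiq : forall q, q \in K -> sigma jstar * sigma q = - (sigma q * sigma jstar).
  by move=> q qK; apply/eqP; apply: (Hj q (subsetP KV q qK)).2.
have chiB : sigma jstar * B = - (B * sigma jstar).
  rewrite mulr_sumr mulr_suml -sumrN; apply: eq_bigr => q qK.
  rewrite -sAr -sAl -scalerN; congr (_ *: _).
  by rewrite mulrA chiq // mulNr -[sigma q * sigma jstar * _]mulrA chiC // mulrA.
have Hi : g * A + A * g = B *+ 2.
  rewrite /g mulr_suml mulr_sumr -big_split /= -sumrMnl; apply: eq_bigr => k kK /=.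
  rewrite -sAl -sAr -scalerDr scalerMnr; congr (_ *: _).
  have cl : is_clique [set y in V :\: K | fadj k y].
    apply: clique_sub (sK k kK); apply/subsetP => y; rewrite !inE.
    by case/andP => /andP [-> ->] ->.
  rewrite (AC c cl) /C.
  suff -> : (V :\: K) :\: [set y in V :\: K | fadj k y] = V :\: cnb k by [].
  apply/setP => y; rewrite !inE; case: (y \in V) => //=; rewrite ?andbT ?andbF //.
  have [->|nyk] := eqVneq y k; first by rewrite kK.
  case yK : (y \in K) => /=; last by rewrite andbT.
  by rewrite (cliqueP _ cK k y kK yK) // eq_sym.
have Hii : g * B = B * g.
  apply/eqP; rewrite -subr_eq0; apply/eqP.
  have -> : g * B - B * g = \sum_(k in K) \sum_(j in K) (c k * c j) *: Dm V c k j.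
    have E1 : g * B = \sum_(k in K) \sum_(j in K) (c k * c j) *: (sigma k * (sigma j * C j)).
      rewrite /g mulr_suml; apply: eq_bigr => k kK; rewrite mulr_sumr.
      by apply: eq_bigr => j jK; rewrite -sAl -sAr scalerA.
    have E2 : B * g = \sum_(k in K) \sum_(j in K) (c k * c j) *: ((sigma j * C j) * sigma k).
      rewrite /g mulr_sumr; apply: eq_bigr => k kK; rewrite mulr_suml.
      by apply: eq_bigr => j jK; rewrite -sAl -sAr scalerA mulrC.
    rewrite E1 E2 -sumrB; apply: eq_bigr => k kK; rewrite -sumrB.
    by apply: eq_bigr => j jK; rewrite /Dm scalerBr.
  set S := \sum_(k in K) _.
  have S2 : S *+ 2 = 0.
    rewrite mulr2n {1}/S exchange_big /S -big_split /=; apply: big1 => k kK.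
    rewrite -big_split /=; apply: big1 => j jK /=.
    by rewrite mulrC -scalerDr addrC (Dsym c sc) ?scaler0.
  move/eqP: S2; rewrite -scaler_nat scaler_eq0 pnatr_eq0 /=.
  by move/eqP.
rewrite TE -mulrA mulrDr chiA chiB -mulrBl mulrA final_alg //.
Qed.

End Comb.

Lemma prod_scale n (S : {set pauli_string n}) (b : pauli_string n -> algC) :
  \prod_(j in S) (b j *: sigma j) = (\prod_(j in S) b j) *: PS S.
Proof.
rewrite /PS; elim/big_rec3: _ => [|j x y z _ ->]; first by rewrite scale1r.
by rewrite -sAl -sAr scalerA.
Qed.

Lemma TG_TT n (V : {set pauli_string n}) (b : pauli_string n -> algC) v c :
  (forall j, c j = - v * b j) -> TG V b v = TT V c.
Proof.
move=> Hc; rewrite /TG /TT; apply: eq_bigr => S _.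
rewrite /hS /hterm prod_scale scalerA; congr (_ *: _).
by rewrite (eq_bigr _ (fun j _ => Hc j)) big_split /= prodr_const.
Qed.

End Helpers.
Import Helpers.

Theorem lemma12 (n : nat) (V : {set pauli_string n})
  (b : pauli_string n -> algC) (K : {set pauli_string n})
  (jstar : pauli_string n) (u : algC) :
  (forall j, j \in V -> b j \is Num.real /\ b j != 0) ->
  claw_free V ->
  simplicial_clique V K ->
  simplicial_mode V K jstar ->
  TG V b u * (1 + u *: \sum_(j in K) hterm b j) * sigma jstar * TG V b (- u)
  = ZG V b u * (1 - u *: \sum_(j in K) hterm b j) * sigma jstar.
Proof.
move=> _ _ sc sm.
have gE : u *: \sum_(j in K) hterm b j = \sum_(k in K) (u * b k) *: sigma k.
  by rewrite scaler_sumr; apply: eq_bigr => k _; rewrite /hterm scalerA.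
have TE : TG V b (- u) = TT V (fun j => u * b j) by apply: TG_TT => j; rewrite opprK.
rewrite /ZG gE TE -!mulrA; congr (_ * _); rewrite !mulrA.
exact: core.
Qed.
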